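(* In the smooth setting described in the context, let $\hat p\in P$ and let $x,\bar x\in\mathbb{R}^n$. If $\pi_i=\nabla f_i(x)$ and $\bar\pi_i=\nabla f_i(\bar x)$ for $i\in[m]$, then $$\sum_{i=1}^m\hat p_i\,W_{f_i^*}(\pi_i;\bar\pi_i)\ge\frac{1}{2L_f}\Big\|\sum_{i=1}^m\hat p_i(\pi_i-\bar\pi_i)\Big\|^2.$$
   Context: Smooth setting: $P\subseteq\{p\in\mathbb{R}^m:\sum_ip_i=1,p\ge0\}$ is closed convex; each $f_i:\mathbb{R}^n\to\mathbb{R}$ is convex and differentiable with Lipschitz continuous gradient, and $f_i^*$ is its Fenchel conjugate. For $p\in P$, $L_p$ denotes the Lipschitz constant of $\nabla(\sum_ip_if_i)$, and $L_f:=\max_{p\in P}L_p$. For $\pi_i\in\mathrm{dom}f_i^*$ and $\bar\pi_i=\nabla f_i(\bar x)$, the Bregman distance is $W_{f_i^*}(\pi_i;\bar\pi_i)=f_i^*(\pi_i)-f_i^*(\bar\pi_i)-\langle\bar x,\pi_i-\bar\pi_i\rangle$, where $\bar x\in\partial f_i^*(\bar\pi_i)$ is used as the subgradient of $f_i^*$ at $\bar\pi_i$. *)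

(* Defs.v *)
From HB Require Import structures.
From mathcomp Require Import all_boot all_order all_algebra.
From mathcomp Require Import all_classical all_reals all_analysis.
Set Implicit Arguments. Unset Strict Implicit. Unset Printing Implicit Defensive.
Import Order.TTheory GRing.Theory Num.Theory.
Import numFieldNormedType.Exports.
Local Open Scope classical_set_scope.
Local Open Scope ring_scope.

Section Defs.
Variable R : realType.

Definition dotp {n : nat} (u v : 'rV[R]_n) : R := \sum_(j < n) u 0 j * v 0 j.
Definition enorm {n : nat} (u : 'rV[R]_n) : R := Num.sqrt (dotp u u).

Definition grad {n : nat} (f : 'rV[R]_n -> R) (x : 'rV[R]_n) : 'rV[R]_n :=
  \row_(j < n) 'D_(delta_mx 0 j) f x.

Definition convex_fun {n : nat} (f : 'rV[R]_n -> R) : Prop :=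
  forall (x y : 'rV[R]_n) (t : R), 0 <= t <= 1 ->
    f (t *: x + (1 - t) *: y) <= t * f x + (1 - t) * f y.

Definition convex_subset {m : nat} (P : set 'rV[R]_m) : Prop :=
  forall (p q : 'rV[R]_m) (t : R), P p -> P q -> 0 <= t <= 1 ->
    P (t *: p + (1 - t) *: q).

Definition in_simplex {m : nat} (p : 'rV[R]_m) : Prop :=
  \sum_(i < m) p 0 i = 1 /\ forall i, 0 <= p 0 i.

Definition lipschitz_with {n : nat} (g : 'rV[R]_n -> 'rV[R]_n) (L : R) : Prop :=
  forall x y, enorm (g x - g y) <= L * enorm (x - y).

Definition lipconst {n : nat} (g : 'rV[R]_n -> 'rV[R]_n) : R :=
  inf [set L | 0 <= L /\ lipschitz_with g L].

Definition Lp {m n : nat} (f : 'I_m -> 'rV[R]_n -> R) (p : 'rV[R]_m) : R :=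
  lipconst (grad (fun x => \sum_(i < m) p 0 i * f i x)).

(* L_f := max_{p in P} L_p (taken as a supremum) *)
Definition Lf {m n : nat} (P : set 'rV[R]_m) (f : 'I_m -> 'rV[R]_n -> R) : R :=
  sup [set Lp f p | p in P].

Definition fconj {n : nat} (f : 'rV[R]_n -> R) (y : 'rV[R]_n) : \bar R :=
  ereal_sup [set (dotp x y - f x)%:E | x in [set: 'rV[R]_n]].

(* Bregman distance W_{f^*}(pi; pibar) with subgradient xbar of f^* at pibar *)
Definition Wconj {n : nat} (f : 'rV[R]_n -> R) (xbar pi pibar : 'rV[R]_n) : \bar R :=
  (fconj f pi - fconj f pibar - (dotp xbar (pi - pibar))%:E)%E.

End Defs.

(* Main.v *)
Require Import Defs.
From HB Require Import structures.
From mathcomp Require Import all_boot all_order all_algebra.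
From mathcomp Require Import all_classical all_reals all_analysis.
From mathcomp Require Import ring lra.
Import Order.TTheory GRing.Theory Num.Theory.
Import numFieldNormedType.Exports.
Local Open Scope classical_set_scope.
Local Open Scope ring_scope.

Section Alg.
Variable R : realType.
Variable n : nat.
Implicit Types u v w : 'rV[R]_n.

Lemma dotpC u v : dotp u v = dotp v u.
Proof. by apply: eq_bigr => j _; rewrite mulrC. Qed.
Lemma dotpDl u v w : dotp (u + v) w = dotp u w + dotp v w.
Proof. by rewrite /dotp -big_split; apply: eq_bigr => j _; rewrite !mxE mulrDl. Qed.
Lemma dotpZl c u v : dotp (c *: u) v = c * dotp u v.
Proof. by rewrite /dotp mulr_sumr; apply: eq_bigr => j _; rewrite !mxE mulrA. Qed.
Lemma dotpNl u v : dotp (- u) v = - dotp u v.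
Proof. by rewrite -scaleN1r dotpZl mulN1r. Qed.
Lemma dotpBl u v w : dotp (u - v) w = dotp u w - dotp v w.
Proof. by rewrite dotpDl dotpNl. Qed.
Lemma dotpDr u v w : dotp w (u + v) = dotp w u + dotp w v.
Proof. by rewrite dotpC dotpDl !(dotpC w). Qed.
Lemma dotpZr c u v : dotp v (c *: u) = c * dotp v u.
Proof. by rewrite dotpC dotpZl dotpC. Qed.
Lemma dotpBr u v w : dotp w (u - v) = dotp w u - dotp w v.
Proof. by rewrite dotpC dotpBl !(dotpC w). Qed.
Lemma dotp_suml m (c : 'I_m -> R) (a : 'I_m -> 'rV[R]_n) v :
  dotp (\sum_(i < m) c i *: a i) v = \sum_(i < m) c i * dotp (a i) v.
Proof.
elim: m c a => [|m IH] c a; first by rewrite !big_ord0 /dotp big1 // => j _; rewrite mxE mul0r.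
by rewrite !big_ord_recr /= dotpDl dotpZl IH.
Qed.
Lemma dotp_ge0 u : 0 <= dotp u u.
Proof. by apply: sumr_ge0 => j _; rewrite -expr2 sqr_ge0. Qed.
Lemma enorm_sqr u : enorm u ^+ 2 = dotp u u.
Proof. by rewrite /enorm sqr_sqrtr // dotp_ge0. Qed.
Lemma enorm_ge0 u : 0 <= enorm u.
Proof. exact: sqrtr_ge0. Qed.

Lemma CS2 u v : dotp u v ^+ 2 <= dotp u u * dotp v v.
Proof.
have H s : 0 <= s ^+ 2 * dotp u u - 2 * s * dotp u v + dotp v v.
  have := dotp_ge0 (s *: u - v).
  rewrite !dotpBl !dotpBr !dotpZl !dotpZr (dotpC v u).
  by move=> h; nra.
have [A0|A0] := eqVneq (dotp u u) 0.
  have C0 : dotp u v = 0.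
    apply/eqP; apply: contraT => C0.
    have := H ((dotp v v + 1) / (2 * dotp u v)).
    rewrite A0 mulr0 add0r.
    have -> : 2 * ((dotp v v + 1) / (2 * dotp u v)) * dotp u v = dotp v v + 1.
      by field; rewrite C0.
    have := dotp_ge0 v; lra.
  by rewrite C0 A0 expr0n mul0r.
have Ap : 0 < dotp u u by rewrite lt_neqAle eq_sym A0 dotp_ge0.
have := H (dotp u v / dotp u u).
set a := dotp u u; set c := dotp u v; set b := dotp v v => h.
have e : (c / a) ^+ 2 * a - 2 * (c / a) * c = - (c ^+ 2 / a).
  by field; rewrite gt_eqF.
rewrite e in h.
have : c ^+ 2 / a <= b by lra.
by rewrite ler_pdivrMr // mulrC.
Qed.

Lemma CS u v : dotp u v <= enorm u * enorm v.
Proof.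
rewrite /enorm -sqrtrM ?dotp_ge0 //.
apply: le_trans (ler_norm _) _.
rewrite -sqrtr_sqr; apply: ler_wsqrtr; exact: CS2.
Qed.

Lemma enorm_tri u v : enorm (u + v) <= enorm u + enorm v.
Proof.
rewrite -(ler_pXn2r (_ : 0 < 2)%N) ?nnegrE ?addr_ge0 ?enorm_ge0 //.
rewrite enorm_sqr dotpDl !dotpDr (dotpC v u) sqrrD !enorm_sqr.
have := CS u v; lra.
Qed.

Lemma enormZ c u : enorm (c *: u) = `|c| * enorm u.
Proof.
by rewrite /enorm dotpZl dotpZr mulrA -expr2 sqrtrM ?sqr_ge0 // sqrtr_sqr.
Qed.

Lemma enorm_sum m (c : 'I_m -> R) (a : 'I_m -> 'rV[R]_n) :
  enorm (\sum_(i < m) c i *: a i) <= \sum_(i < m) `|c i| * enorm (a i).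
Proof.
elim: m c a => [|m IH] c a.
  by rewrite !big_ord0 /enorm /dotp big1 ?sqrtr0 // => j _; rewrite mxE mul0r.
rewrite !big_ord_recr /=; apply: le_trans (enorm_tri _ _) _.
by rewrite enormZ lerD2r IH.
Qed.

Lemma descent (F : 'rV[R]_n -> R) (G : 'rV[R]_n -> 'rV[R]_n) L :
  (forall z v, is_derive z v F (dotp (G z) v)) -> lipschitz_with G L ->
  forall y h, F (h + y) <= F y + dotp (G y) h + L / 2 * dotp h h.
Proof.
move=> HF HL y h.
set B := dotp h h; set c0 := dotp (G y) h.
pose g := fun t : R => F (t *: h + y).
have dg (t : R) : is_derive t (1 : R) g (dotp (G (t *: h + y)) h).
  have [Hd Hv] := HF (t *: h + y) h.
  have E : (fun s : R => s^-1 *: ((g \o shift t) (s *: 1) - g t)) =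
           (fun s : R => s^-1 *: ((F \o shift (t *: h + y)) (s *: h) - F (t *: h + y))).
    apply/funext => s /=; rewrite /g /=.
    by rewrite [s *: 1]mulr1 scalerDl addrA.
  apply: DeriveDef; first by rewrite /derivable E.
  by rewrite /derive E.
pose k := g - c0 \*: id - (L / 2 * B) \*: (id * id : R -> R).
have dk (t : R) : is_derive t (1:R) k (dotp (G (t *: h + y)) h - c0 *: 1 - (L / 2 * B) *: (t *: 1 + t *: 1)).
  apply: is_deriveB.
have [c c01 Hc] := @MVT R k _ 0 1 ltr01 (fun t _ => dk t)
  (derivable_within_continuous (fun t _ => @ex_derive _ _ _ _ _ _ _ (dk t))).
have c0' : 0 < c by move: c01; rewrite in_itv /= => /andP[].
have kle : k 1 - k 0 <= 0.
  rewrite Hc subr0 mulr1.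
  have l1 : dotp (G (c *: h + y)) h - c0 <= L * c * B.
    rewrite /c0 -dotpBl.
    apply: le_trans (CS _ _) _.
    have := HL (c *: h + y) y; rewrite addrK enormZ gtr0_norm // => Hl.
    apply: le_trans (ler_wpM2r (enorm_ge0 h) Hl) _.
    by rewrite -!mulrA -expr2 enorm_sqr.
  have sA : forall a : R, a%:A = a := fun a => mulr1 a.
  rewrite !sA.
  have -> : (L / 2 * B) *: (c + c) = (L/2*B) * (c+c) by [].
  lra.
have k1 : k 1 = F (1 *: h + y) - c0 * 1 - (L/2*B) * (1*1) by [].
have k0 : k 0 = F (0 *: h + y) - c0 * 0 - (L/2*B) * (0*0) by [].
move: kle; rewrite k1 k0 scale1r scale0r add0r !mulr0 !mulr1; lra.
Qed.

Lemma cocoerc (F : 'rV[R]_n -> R) (G : 'rV[R]_n -> 'rV[R]_n) L x y :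
  (forall z v, is_derive z v F (dotp (G z) v)) -> lipschitz_with G L -> 0 < L ->
  (forall w, F x + dotp (G x) (w - x) <= F w) ->
  dotp (G y - G x) (G y - G x) / (2 * L) <= F y - F x - dotp (G x) (y - x).
Proof.
move=> HF HL L0 Hx.
set d := G y - G x.
set h := (- L^-1) *: d.
have H1 := descent F G L HF HL y h.
have H2 := Hx (h + y).
have e1 : h + y - x = h + (y - x) by rewrite addrA.
rewrite e1 dotpDr in H2.
have ea : dotp (G y) h = - L^-1 * dotp (G y) d by rewrite dotpZr.
have eb : dotp (G x) h = - L^-1 * dotp (G x) d by rewrite dotpZr.
have eD : dotp d d = dotp (G y) d - dotp (G x) d by rewrite {1}/d dotpBl.
have ehh : L / 2 * dotp h h = L^-1 * dotp d d / 2.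
  by rewrite /h dotpZl dotpZr; field; rewrite gt_eqF.
have eg : dotp d d / (2 * L) = L^-1 * dotp d d / 2.
  by field; rewrite gt_eqF.
rewrite ea ehh in H1; rewrite eb in H2; rewrite eg eD.
rewrite eD in H1.
set iL := L^-1 in H1 H2 *.
set a := dotp (G y) d in H1 H2 *.
set b := dotp (G x) d in H1 H2 *.
nra.
Qed.
End Alg.
Arguments dotpC {R n}.
Arguments dotpDl {R n}.
Arguments dotpZl {R n}.
Arguments dotpNl {R n}.
Arguments dotpBl {R n}.
Arguments dotpDr {R n}.
Arguments dotpZr {R n}.
Arguments dotpBr {R n}.
Arguments dotp_suml {R n}.
Arguments dotp_ge0 {R n}.
Arguments enorm_sqr {R n}.
Arguments enorm_ge0 {R n}.
Arguments CS2 {R n}.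
Arguments CS {R n}.
Arguments enorm_tri {R n}.
Arguments enormZ {R n}.
Arguments enorm_sum {R n}.
Arguments descent {R n}.
Arguments cocoerc {R n}.

Lemma grad_dot (R : realType) n (f : 'rV[R]_n -> R) x v :
  differentiable f x -> 'D_v f x = dotp (grad f x) v.
Proof.
move=> df; rewrite deriveE // {1}(row_sum_delta v) linear_sum /dotp.
apply: eq_bigr => j _; rewrite linearZ /= mxE deriveE // mulrC.
done.
Qed.

Lemma conv_grad (R : realType) n (f : 'rV[R]_n -> R) x z : convex_fun f -> differentiable f x ->
  'D_(z - x) f x <= f z - f x.
Proof.
move=> cf df.
set v := z - x.
have Hd : (fun h : R => h^-1 *: (f (h *: v + x) - f x)) @ 0^' --> 'D_v f x.
  exact: (@diff_derivable _ _ _ f x v df).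
have Hr : (fun h : R => h^-1 *: (f (h *: v + x) - f x)) @ 0^'+ --> 'D_v f x.
  apply: cvg_trans Hd; apply: cvg_app; apply: within_subset => u /= u0.
  by rewrite gt_eqF.
apply: (cvgr_to_le Hr).
near=> h.
have h0 : 0 < h by near: h; exact: nbhs_right_gt.
have h1 : h < 1 by near: h; exact: nbhs_right_lt.
have e : h *: v + x = h *: z + (1 - h) *: x.
  by rewrite /v scalerBr scalerBl scale1r addrA addrAC.
rewrite e /=.
have := cf z x h; rewrite (ltW h0) (ltW h1) /= => /(_ isT) c.
rewrite ler_pdivrMl //; lra.
Unshelve. all: by end_near. Qed.

Lemma grad_ineq (R : realType) n (f : 'rV[R]_n -> R) x w : convex_fun f -> differentiable f x ->
  f x + dotp (grad f x) (w - x) <= f w.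
Proof. move=> cf df; have := @conv_grad _ _ f x w cf df; rewrite grad_dot //; lra. Qed.

Lemma fconj_grad (R : realType) n (f : 'rV[R]_n -> R) z : convex_fun f -> (forall y, differentiable f y) ->
  fconj f (grad f z) = (dotp z (grad f z) - f z)%:E.
Proof.
move=> cf df; apply/eqP; rewrite eq_le; apply/andP; split.
  apply: ge_ereal_sup => _ [w _ <-]; rewrite lee_fin.
  have := @grad_ineq _ _ f z w cf (df z); rewrite dotpBr !(dotpC _ (grad f z)); lra.
by apply: ereal_sup_ubound; exists z.
Qed.

Lemma dotp_e (R : realType) n (u : 'rV[R]_n) j : dotp u 'e_j = u 0 j.
Proof.
rewrite /dotp (bigD1 j) //= big1 ?addr0; first by rewrite mxE !eqxx mulr1.
by move=> k kj; rewrite mxE eqxx /= (negbTE kj) mulr0.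
Qed.

Section Main.
Variables (R : realType) (m n : nat) (f : 'I_m -> 'rV[R]_n -> R).

Definition FF (p : 'rV[R]_m) := fun z => \sum_(i < m) p 0 i * f i z.
Definition GG (p : 'rV[R]_m) z := \sum_(i < m) p 0 i *: grad (f i) z.

Lemma FF_derive (df : forall i y, differentiable (f i) y) p z v :
  is_derive z v (FF p) (dotp (GG p z) v).
Proof.
have H := @is_derive_sum R _ _ m (fun i => p 0 i \*: f i) z v
  (fun i => p 0 i *: 'D_v (f i) z)
  (fun i => is_deriveZ (p 0 i) (derivableP (@diff_derivable _ _ _ (f i) z v (df i z)))).
have -> : FF p = \sum_(i < m) (p 0 i \*: f i).
  by rewrite fct_sumE; apply/funext.
apply: is_derive_eq H _.
rewrite /GG dotp_suml; apply: eq_bigr => i _.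
by rewrite grad_dot // dotpC.
Qed.

Lemma grad_FF (df : forall i y, differentiable (f i) y) p z : grad (FF p) z = GG p z.
Proof.
apply/rowP => j; rewrite mxE.
have [_ ->] := FF_derive df p z 'e_j.
by rewrite dotp_e.
Qed.

Lemma lip_FF (df : forall i y, differentiable (f i) y) (Lc : 'I_m -> R) (p : 'rV[R]_m) :
  (forall i, lipschitz_with (grad (f i)) (Lc i)) -> (forall i, `|p 0 i| <= 1) ->
  lipschitz_with (grad (FF p)) (\sum_(i < m) `|Lc i|).
Proof.
move=> HL Hp z w; rewrite !grad_FF // /GG -sumrB.
rewrite (eq_bigr (fun i => p 0 i *: (grad (f i) z - grad (f i) w))); last first.
  by move=> i _; rewrite scalerBr.
apply: le_trans (enorm_sum _ _ _) _.
rewrite mulr_suml; apply: ler_sum => i _.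
have h1 := HL i z w.
have h2 : Lc i * enorm (z - w) <= `|Lc i| * enorm (z - w).
  by apply: ler_wpM2r; [exact: enorm_ge0 | exact: ler_norm].
have h3 := enorm_ge0 (grad (f i) z - grad (f i) w).
have h4 := normr_ge0 (p 0 i).
have h5 := Hp i.
nra.
Qed.
End Main.
Arguments FF {R m n} f p.
Arguments GG {R m n} f p.
Arguments FF_derive {R m n f}.
Arguments grad_FF {R m n f}.
Arguments lip_FF {R m n f}.


Theorem lemma3p5 (R : realType) (m n : nat) (P : set 'rV[R]_m)
  (f : 'I_m -> 'rV[R]_n -> R) (phat : 'rV[R]_m) (x xbar : 'rV[R]_n) :
  closed P -> convex_subset P -> (forall p, P p -> in_simplex p) ->
  (forall i, convex_fun (f i)) ->
  (forall i y, differentiable (f i) y) ->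
  (forall i, exists L : R, lipschitz_with (grad (f i)) L) ->
  P phat ->
  (\sum_(i < m) (phat 0 i)%:E *
      Wconj (f i) xbar (grad (f i) x) (grad (f i) xbar) >=
   ((2 * Lf P f)^-1 *
      enorm (\sum_(i < m) phat 0 i *: (grad (f i) x - grad (f i) xbar)) ^+ 2)%:E)%E.
Proof.
move=> _ _ Hsimp cf df Hlip Pp.
pose Lc i := projT1 (cid (Hlip i)).
have HLc i : lipschitz_with (grad (f i)) (Lc i) := projT2 (cid (Hlip i)).
set M := \sum_(i < m) `|Lc i|.
have M0 : 0 <= M by apply: sumr_ge0 => i _; exact: normr_ge0.
have Hp1 p : P p -> forall i, `|p 0 i| <= 1.
  move=> /Hsimp [s1 s0] i; rewrite ger0_norm // -s1 (bigD1 i) //= lerDl.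
  by apply: sumr_ge0 => j _.
pose S (p : 'rV[R]_m) := [set L : R | 0 <= L /\ lipschitz_with (grad (FF f p)) L].
have Lpeq p : Lp f p = inf (S p) by [].
have SM p : P p -> S p M.
  move=> Pp'; split => //; exact: lip_FF df Lc p HLc (Hp1 p Pp').
have Slb p : has_lbound (S p) by exists 0 => y [].
have LpM p : P p -> 0 <= Lp f p <= M.
  move=> Pp'; rewrite Lpeq; apply/andP; split.
    by apply: lb_le_inf; [exists M; exact: SM | move=> y []].
  exact: (ge_inf (Slb p)) (SM p Pp').
have LpLf : Lp f phat <= Lf P f.
  apply: (sup_upper_bound); last by exists phat.
  split; first by exists (Lp f phat), phat.
  by exists M => _ [p Pp' <-]; have /andP[] := LpM p Pp'.
set c := Lp f phat.
have c0 : 0 <= c by have /andP[] := LpM phat Pp.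
set d := GG f phat xbar - GG f phat x.
set E := FF f phat xbar - FF f phat x - dotp (GG f phat x) (xbar - x).
set D := dotp d d.
have D0 : 0 <= D by exact: dotp_ge0.
have key L' : c < L' -> D / (2 * L') <= E.
  move=> cL.
  have [L'' [L''0 HL''] lt] := @inf_adherent R (S phat) (L' - c) (ltac:(lra))
     (conj (ex_intro _ M (SM phat Pp)) (Slb phat)).
  rewrite -Lpeq -/c in lt.
  have HG : lipschitz_with (GG f phat) L'.
    move=> z w; rewrite -!grad_FF //.
    apply: le_trans (HL'' z w) _; apply: ler_wpM2r; [exact: enorm_ge0|lra].
  apply: cocoerc (FF_derive df phat) HG _ _; first lra.
  move=> w; rewrite /FF /GG dotp_suml -big_split; apply: ler_sum => i _ /=.
  rewrite -mulrDr; apply: ler_wpM2l.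
    by have /Hsimp [_ ->] := Pp.
  exact: grad_ineq.
have W i : Wconj (f i) xbar (grad (f i) x) (grad (f i) xbar) =
    (f i xbar - f i x - dotp (grad (f i) x) (xbar - x))%:E.
  rewrite /Wconj !fconj_grad // -!EFinB; congr (_%:E).
  rewrite !dotpBr (dotpC _ xbar) (dotpC _ x); lra.
rewrite (eq_bigr (fun i => (phat 0 i * (f i xbar - f i x - dotp (grad (f i) x) (xbar - x)))%:E)); last first.
  by move=> i _; rewrite W EFinM.
rewrite sumEFin lee_fin.
have -> : \sum_(i < m) phat 0 i * (f i xbar - f i x - dotp (grad (f i) x) (xbar - x)) = E.
  rewrite /E /FF /GG dotp_suml -!sumrB; apply: eq_bigr => i _; ring.
have -> : enorm (\sum_(i < m) phat 0 i *: (grad (f i) x - grad (f i) xbar)) ^+ 2 = D.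
  rewrite enorm_sqr /D.
  have -> : \sum_(i < m) phat 0 i *: (grad (f i) x - grad (f i) xbar) = (-1) *: d.
    rewrite scaleN1r /d opprB /GG -sumrB; apply: eq_bigr => i _; by rewrite scalerBr.
  rewrite dotpZl dotpZr; ring.
have E0 : 0 <= E.
  have := key (c + 1) ltac:(lra).
  have : 0 <= D / (2 * (c + 1)) by apply: divr_ge0 => //; lra.
  lra.
have keyD : D <= 2 * c * E.
  apply/ler_addgt0Pr => e e0.
  set q := e / (2 * E + 1).
  have q0 : 0 < q by apply: divr_gt0 => //; lra.
  have qe : 2 * q * E + q = e.
    rewrite /q; field; lra.
  have := key (c + q) ltac:(lra).
  rewrite ler_pdivrMr; last lra.
  nra.
have [cLf|cLf] := eqVneq c (Lf P f).
  rewrite -cLf.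
  have [->|cn0] := eqVneq c 0; first by rewrite mulr0 invr0 mul0r.
  have cp : 0 < c by rewrite lt_neqAle eq_sym cn0 c0.
  rewrite mulrC ler_pdivrMr; lra.
have cl : c < Lf P f by rewrite lt_neqAle cLf LpLf.
by rewrite mulrC; apply: key.
Qed.
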